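(* For every positive integer $d$, the following identity holds in $K[t,z]$: \[\sum_{a\in A(d)}\chi_t(a)\,\frac{\ell_d E_d(z-a)}{z-a}=\sum_{j=0}^{d-1}b_j(t)E_j(z).\]
   Context: $A=\mathbb{F}_q[\theta]$, $K=\mathbb{F}_q(\theta)$; $\chi_t:A\to\mathbb{F}_q[t]$ the $\mathbb{F}_q$-algebra map with $\theta\mapsto t$. $b_j(t)=\prod_{i=0}^{j-1}(t-\theta^{q^i})$; $\ell_d=\prod_{j=1}^{d}(\theta-\theta^{q^j})$. $D_j$ is the product of all monic polynomials of degree $j$ in $A$. $A(d)$ is the set of elements of $A$ of degree $<d$ ($A(0)=\{0\}$), and $E_d(z)=D_d^{-1}\prod_{a\in A(d)}(z-a)$; note $E_d(z-a)/(z-a)$ is a polynomial in $z$ for $a\in A(d)$. *)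

(* Defs.v *)
(* A = {poly F}, K = {fraction {poly F}}, F a finite field, q = #|F|.
   K[t,z] is represented as {poly {poly K}}: outer variable z, inner variable t. *)
From HB Require Import structures.
From mathcomp Require Import all_boot all_order all_algebra.
Set Implicit Arguments. Unset Strict Implicit. Unset Printing Implicit Defensive.
Import GRing.Theory.
Local Open Scope ring_scope.

Notation Kfrac F := {fraction {poly F}}.

Definition iA (F : finFieldType) (a : {poly F}) : Kfrac F := FracField.tofrac a.

(* A(d): the elements of A of degree < d (i.e. size <= d), enumerated without
   repetition as Poly s for coefficient tuples s : d.-tuple F. A(0) = [:: 0]. *)
Definition Adeg (F : finFieldType) (d : nat) : seq {poly F} :=
  [seq Poly (tval s) | s : d.-tuple F].

Definition Dprod (F : finFieldType) (j : nat) : {poly F} :=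
  \prod_(s : j.-tuple F) ('X^j + Poly (tval s)).

Definition Ecarlitz (F : finFieldType) (d : nat) : {poly Kfrac F} :=
  (iA (Dprod F d))^-1 *: \prod_(a <- Adeg F d) ('X - (iA a)%:P).

Definition ell (F : finFieldType) (d : nat) : {poly F} :=
  \prod_(1 <= j < d.+1) ('X - 'X^(#|F| ^ j)).

Definition bpoly (F : finFieldType) (j : nat) : {poly Kfrac F} :=
  \prod_(i < j) ('X - (iA ('X^(#|F| ^ i)))%:P).

(* chi_t : A -> F_q[t] subset K[t], theta |-> t *)
Definition chi_t (F : finFieldType) (a : {poly F}) : {poly Kfrac F} :=
  map_poly (fun c : F => iA c%:P) a.

Definition liftz (F : finFieldType) (p : {poly Kfrac F}) : {poly {poly Kfrac F}} :=
  map_poly polyC p.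

(* Main.v *)
Require Import Defs.
From HB Require Import structures.
From mathcomp Require Import all_boot all_order all_algebra all_field.
From mathcomp Require Import zify.
Import GRing.Theory.
Set Implicit Arguments. Unset Strict Implicit.
Local Open Scope ring_scope.

Section Carlitz.
Variable F : finFieldType.
Local Notation K := {fraction {poly F}}.
Local Notation q := #|F|.
Definition io : {rmorphism F -> K} := (@tofrac _ \o polyC)%FUN.
Fact th_key : unit. Proof. exact: tt. Qed.
Definition th : K := locked_with th_key (iA ('X : {poly F})).
Lemma thE : th = iA 'X. Proof. by rewrite /th unlock. Qed.
Definition ee n : {poly K} := \prod_(a <- Adeg F n) ('X - (iA a)%:P).

Lemma frobD (x y : K) : (x + y) ^+ q = x ^+ q + y ^+ q.
Proof.
have [p pr pc] := finPcharP F.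
have cF : #|F| = (p ^ logn p #|pPrimeCharType pc|)%N := card_pprimeChar pc.
apply: exprDn_pchar; rewrite cF pnatX pnatE //.
by rewrite (rmorph_pchar io pc).
Qed.

Lemma iAD (a b : {poly F}) : iA (a + b) = iA a + iA b. Proof. by rewrite /iA rmorphD. Qed.
Lemma iAB (a b : {poly F}) : iA (a - b) = iA a - iA b. Proof. by rewrite /iA rmorphB. Qed.
Lemma iAM (a b : {poly F}) : iA (a * b) = iA a * iA b. Proof. by rewrite /iA rmorphM. Qed.
Lemma iA0 : iA (0 : {poly F}) = 0. Proof. by rewrite /iA rmorph0. Qed.
Lemma iA1 : iA (1 : {poly F}) = 1. Proof. by rewrite /iA rmorph1. Qed.
Lemma iAXn n : iA ('X^n : {poly F}) = th ^+ n. Proof. by rewrite thE /iA rmorphXn. Qed.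
Lemma iAC (c : F) : iA c%:P = io c. Proof. by []. Qed.
Lemma iA_eq0 (a : {poly F}) : (iA a == 0) = (a == 0). Proof. by rewrite /iA tofrac_eq0. Qed.
Lemma iA_inj : injective (@iA F).
Proof. by move=> a b /eqP; rewrite /iA tofrac_eq => /eqP. Qed.
Lemma th_neq0 : th != 0. Proof. by rewrite thE iA_eq0 polyX_eq0. Qed.
Lemma q_gt1 : (1 < q)%N. Proof. exact: finNzRing_gt1. Qed.

Lemma mem_Adeg n (a : {poly F}) : (a \in Adeg F n) = (size a <= n)%N.
Proof.
apply/idP/idP.
  by case/mapP=> s _ ->; apply: leq_trans (size_Poly _) _; rewrite size_tuple.
move=> ha; apply/mapP; exists [tuple a`_i | i < n]; first by rewrite mem_enum.
apply/polyP=> i; rewrite coef_Poly.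
have [lt_in|le_ni] := ltnP i n.
  by rewrite -[i]/(nat_of_ord (Ordinal lt_in)) -tnth_nth tnth_mktuple.
move/leq_sizeP: (ha) => /(_ i le_ni) ->.
by rewrite nth_default // size_tuple.
Qed.

Lemma uniq_Adeg n : uniq (Adeg F n).
Proof.
have inj : injective (fun s : n.-tuple F => Poly s).
  move=> s t eq_st; apply/val_inj/(@eq_from_nth _ 0); first by rewrite !size_tuple.
  by move=> i _; have := congr1 (fun p : {poly F} => p`_i) eq_st; rewrite /= !coef_Poly.
by rewrite /Adeg (map_inj_uniq inj); apply: enum_uniq.
Qed.

Lemma size_Adeg n : size (Adeg F n) = (#|F| ^ n)%N.
Proof. by rewrite size_map -cardE card_tuple. Qed.


Lemma ee_eval n x : (ee n).[x] = \prod_(a <- Adeg F n) (x - iA a).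
Proof. by rewrite /ee horner_prod; apply: eq_bigr => a _; rewrite hornerXsubC. Qed.

Lemma size_ee n : size (ee n) = (q ^ n).+1.
Proof. by rewrite /ee size_prod_XsubC size_Adeg. Qed.

Lemma ee_root n (a : {poly F}) : (size a <= n)%N -> (ee n).[iA a] = 0.
Proof.
move=> ha; rewrite ee_eval; apply/eqP; rewrite prodf_seq_eq0; apply/hasP.
by exists a; rewrite ?mem_Adeg // subrr eqxx.
Qed.

Lemma Dprod_Adeg n : Dprod F n = \prod_(a <- Adeg F n) ('X^n + a).
Proof. by rewrite /Dprod /Adeg big_map big_enum. Qed.

Lemma perm_Adeg_opp n : perm_eq (map -%R (Adeg F n)) (Adeg F n).
Proof.
apply: uniq_perm; first by rewrite (map_inj_uniq oppr_inj) uniq_Adeg.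
  exact: uniq_Adeg.
move=> x; rewrite -{1}(opprK x) (mem_map oppr_inj) !mem_Adeg size_polyN //.
Qed.

Lemma Dprod_neq0 n : Dprod F n != 0.
Proof.
rewrite Dprod_Adeg prodf_seq_neq0; apply/allP => a; rewrite mem_Adeg => ha /=.
by rewrite -size_poly_eq0 size_polyDl ?size_polyXn.
Qed.

Lemma Dprod_eval n : iA (Dprod F n) = (ee n).[th ^+ n].
Proof.
rewrite ee_eval Dprod_Adeg /iA rmorph_prod -(perm_big _ (perm_Adeg_opp n)) /= big_map.
by apply: eq_bigr => a _; rewrite rmorphD rmorphN rmorphXn thE.
Qed.

Lemma Ec_thn n : (Ecarlitz F n).[th ^+ n] = 1.
Proof. by rewrite /Ecarlitz hornerZ -Dprod_eval mulVf // iA_eq0 Dprod_neq0. Qed.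

Lemma Ec_root n (a : {poly F}) : (size a <= n)%N -> (Ecarlitz F n).[iA a] = 0.
Proof. by move=> ha; rewrite /Ecarlitz hornerZ ee_root ?mulr0. Qed.

Lemma Ec_root_th n i : (i < n)%N -> (Ecarlitz F n).[th ^+ i] = 0.
Proof. by move=> lt; rewrite -iAXn Ec_root ?size_polyXn. Qed.

Lemma size_Ec n : size (Ecarlitz F n) = (q ^ n).+1.
Proof.
by rewrite /Ecarlitz size_scale ?size_ee // invr_eq0 iA_eq0 Dprod_neq0.
Qed.

Lemma iA_expand (a : {poly F}) : iA a = \sum_(i < size a) io a`_i * th ^+ i.
Proof.
rewrite -{1}(coefK a) poly_def /iA rmorph_sum; apply: eq_bigr => i _.
by rewrite -mul_polyC rmorphM rmorphXn thE.
Qed.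

Definition flin (f : K -> K) :=
  (forall x y, f (x + y) = f x + f y) /\ (forall c x, f (io c * x) = io c * f x).

Lemma flin0 f : flin f -> f 0 = 0.
Proof. by case=> _ fZ; have := fZ 0 0; rewrite rmorph0 !mul0r. Qed.

Lemma flin_sum f I r (P : pred I) (G : I -> K) : flin f ->
  f (\sum_(i <- r | P i) G i) = \sum_(i <- r | P i) f (G i).
Proof. by move=> fl; apply: big_morph; [apply: (proj1 fl) | apply: flin0]. Qed.

Lemma flin_expand f : flin f ->
  forall a, f (iA a) = \sum_(i < size a) io a`_i * f (th ^+ i).
Proof.
move=> fl a; rewrite iA_expand flin_sum //; apply: eq_bigr => i _.
by rewrite (proj2 fl).
Qed.

Lemma flin_vanish f j : flin f -> (forall i, (i < j)%N -> f (th ^+ i) = 0) ->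
  forall a : {poly F}, (size a <= j)%N -> f (iA a) = 0.
Proof.
move=> fl fi a ha; rewrite flin_expand // big1 // => i _.
by rewrite fi ?mulr0 // (leq_trans (ltn_ord i) ha).
Qed.

Lemma flin_ext f g : (forall x, f x = g x) -> flin g -> flin f.
Proof. by move=> e [gD gZ]; split=> *; rewrite !e. Qed.

Lemma flin_id : flin id. Proof. by split. Qed.

Lemma flin_mull k : flin (fun x => k * x).
Proof. by split=> *; rewrite ?mulrDr // mulrCA. Qed.

Lemma flin_comp f g : flin f -> flin g -> flin (fun x => f (g x)).
Proof. by move=> [fD fZ] [gD gZ]; split=> *; rewrite ?gD ?fD ?gZ ?fZ. Qed.

Lemma flin_scale k f : flin f -> flin (fun x => k * f x).
Proof. by move=> [fD fZ]; split=> *; rewrite ?fD ?fZ ?mulrDr // mulrCA. Qed.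

Lemma flin_add f g : flin f -> flin g -> flin (fun x => f x + g x).
Proof.
move=> [fD fZ] [gD gZ]; split=> *; rewrite ?fD ?gD ?fZ ?gZ ?mulrDr //.
by rewrite addrACA.
Qed.

Lemma flin_opp f : flin f -> flin (fun x => - f x).
Proof. by move=> [fD fZ]; split=> *; rewrite ?fD ?fZ ?opprD // mulrN. Qed.

Lemma io_q c : io c ^+ q = io c.
Proof. by rewrite -rmorphXn expf_card. Qed.

Lemma flin_frob : flin (fun x => x ^+ q).
Proof. by split=> *; rewrite ?frobD // exprMn io_q. Qed.


Lemma Adeg0 : Adeg F 0 = [:: 0].
Proof.
have := size_Adeg 0; have := mem_Adeg 0.
case: (Adeg F 0) => [|a [|]] //= H _; congr [:: _]; apply/eqP.
by rewrite -size_poly_eq0 -leqn0 -H inE eqxx.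
Qed.

Lemma Adeg_S n :
  perm_eq (Adeg F n.+1) [seq c%:P + 'X * b | c <- enum F, b <- Adeg F n].
Proof.
apply: uniq_perm; first exact: uniq_Adeg.
  rewrite allpairs_uniq ?enum_uniq ?uniq_Adeg // => -[c b] [c' b'] _ _ /= eq.
  have e0 : c = c'.
    by have := congr1 (fun p : {poly F} => p`_0) eq; rewrite /= !coefD !coefC !coefXM /= !addr0.
  subst c'; congr pair; move/addrI: eq; apply: mulfI; by rewrite polyX_eq0.
move=> a; rewrite mem_Adeg; apply/idP/allpairsP.
  move=> ha; exists (a`_0, \poly_(i < n) a`_i.+1).
  rewrite mem_enum mem_Adeg size_poly; split=> //=.
  apply/polyP=> i; rewrite coefD coefC coefXM; case: i => [|i] /=.
    by rewrite addr0.
  rewrite add0r coef_poly; case: ifP => // hi.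
  by move/leq_sizeP: ha => ->; rewrite // leqNgt ltnS hi.
move=> [[c b] [_ hb ->]] /=; rewrite mem_Adeg in hb.
apply: leq_trans (size_polyD _ _) _; rewrite geq_max size_polyC.
rewrite (leq_trans (leq_b1 _)) //=.
have [->|bn0] := eqVneq b 0; first by rewrite mulr0 size_poly0.
by rewrite mulrC size_mulX.
Qed.

Lemma ee_S_eval n x : (ee n.+1).[x] =
  \prod_(c <- enum F) \prod_(b <- Adeg F n) (x - (io c + th * iA b)).
Proof.
rewrite ee_eval (perm_big _ (Adeg_S n)) big_allpairs_dep /=.
by apply: eq_bigr => c _; apply: eq_bigr => b _; rewrite iAD iAM thE.
Qed.

Lemma prod_enum_const (X : K) : \prod_(c <- enum F) X = X ^+ q.
Proof. by rewrite big_const_seq count_predT -cardE -Monoid.iteropE. Qed.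

Lemma prodFX (X Y : K) :
  \prod_(c <- enum F) (X - io c * Y) = X ^+ q - Y ^+ q.-1 * X.
Proof.
have G w : \prod_(c <- enum F) (w - io c) = w ^+ q - w.
  transitivity ((map_poly io ('X^q - 'X)).[w]); last first.
    by rewrite rmorphB /= map_polyXn map_polyX hornerD hornerN hornerXn hornerX.
  rewrite finField_genPoly rmorph_prod horner_prod big_enum /=.
  by apply: eq_bigr => c _; rewrite map_polyXsubC hornerXsubC.
have [->|Yn0] := eqVneq Y 0.
  under eq_bigr do rewrite mulr0 subr0.
  by rewrite prod_enum_const expr0n -subn1 subn_eq0 leqNgt q_gt1 mul0r subr0.
transitivity (\prod_(c <- enum F) (Y * (X / Y - io c))).
  by apply: eq_bigr => c _; rewrite mulrBr mulrCA divff // mulr1 mulrC.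
rewrite big_split /= prod_enum_const G mulrBr expr_div_n.
congr (_ - _); first by rewrite mulrCA divff ?expf_neq0 // mulr1.
by rewrite -{1}(prednK (ltnW q_gt1)) exprS mulrAC mulrCA divff // mulr1 mulrC.
Qed.


Lemma prod_seq_const (T : Type) (r : seq T) (X : K) : \prod_(i <- r) X = X ^+ size r.
Proof. by rewrite big_const_seq count_predT -Monoid.iteropE. Qed.

Lemma ee_S_formula n : flin (fun x => (ee n).[x]) -> forall x,
  (ee n.+1).[x] = (th ^+ (q ^ n)) ^+ q *
    ((ee n).[th^-1 * x] ^+ q - (ee n).[th^-1] ^+ q.-1 * (ee n).[th^-1 * x]).
Proof.
move=> [eD eZ] x; rewrite ee_S_eval.
transitivity (\prod_(c <- enum F)
   (th ^+ (q ^ n) * ((ee n).[th^-1 * x] - io c * (ee n).[th^-1]))); last first.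
  by rewrite big_split /= prod_enum_const prodFX.
apply: eq_bigr => c _.
transitivity (\prod_(b <- Adeg F n) (th * (th^-1 * x + io (-c) * th^-1 - iA b))).
  apply: eq_bigr => b _.
  rewrite rmorphN mulNr mulrBr mulrDr mulrA mulfV ?th_neq0 // mul1r mulrN.
  by rewrite mulrCA mulfV ?th_neq0 // mulr1 opprD addrA.
rewrite big_split /= prod_seq_const size_Adeg -ee_eval eD eZ rmorphN mulNr.
by [].
Qed.

Lemma flin_ee n : flin (fun x => (ee n).[x]).
Proof.
elim: n => [|n IH].
  apply: (@flin_ext _ id); last exact: flin_id.
  by move=> x; rewrite ee_eval Adeg0 big_seq1 iA0 subr0.
apply: (@flin_ext _ (fun x => (th ^+ (q ^ n)) ^+ q *
    ((ee n).[th^-1 * x] ^+ q - (ee n).[th^-1] ^+ q.-1 * (ee n).[th^-1 * x])));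
  first by move=> x; rewrite (ee_S_formula IH).
have h : flin (fun x => (ee n).[th^-1 * x]) := @flin_comp (fun x => (ee n).[x]) (fun x => th^-1 * x) IH (flin_mull _).
apply: (@flin_scale _ (fun x => (ee n).[th^-1 * x] ^+ q -
   (ee n).[th^-1] ^+ q.-1 * (ee n).[th^-1 * x])).
apply: (@flin_add (fun x => (ee n).[th^-1 * x] ^+ q)
   (fun x => - ((ee n).[th^-1] ^+ q.-1 * (ee n).[th^-1 * x]))).
  exact: (@flin_comp (fun x => x ^+ q) _ flin_frob h).
apply: (@flin_opp (fun x => (ee n).[th^-1] ^+ q.-1 * (ee n).[th^-1 * x])).
exact: (@flin_scale _ _ h).
Qed.

Lemma flin_Ec n : flin (fun x => (Ecarlitz F n).[x]).
Proof.
apply: (@flin_ext _ (fun x => (iA (Dprod F n))^-1 * (ee n).[x])); last first.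
  exact: (@flin_scale _ (fun x => (ee n).[x]) (flin_ee n)).
move=> x.
by rewrite /Ecarlitz hornerZ.
Qed.


Lemma sizeD_le (R : nzRingType) (p r : {poly R}) n :
  (size p <= n)%N -> (size r <= n)%N -> (size (p + r)%R <= n)%N.
Proof. by move=> hp hr; apply: leq_trans (size_polyD _ _) _; rewrite geq_max hp. Qed.

Lemma sizeB_le (R : nzRingType) (p r : {poly R}) n :
  (size p <= n)%N -> (size r <= n)%N -> (size (p - r)%R <= n)%N.
Proof. by move=> hp hr; apply: sizeD_le; rewrite ?size_polyN. Qed.

Lemma size_le_pred (R : nzRingType) (p : {poly R}) n :
  (size p <= n.+1)%N -> p`_n = 0 -> (size p <= n)%N.
Proof.
move=> /leq_sizeP hp pn; apply/leq_sizeP => k; rewrite leq_eqVlt.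
by case/orP => [/eqP <- //|]; apply: hp.
Qed.

Lemma qpow_lt j : (q ^ j < q ^ j.+1)%N.
Proof. by rewrite ltn_exp2l ?q_gt1. Qed.

Lemma coef_comp_thX (p : {poly K}) i : (p \Po (th *: 'X))`_i = p`_i * th ^+ i.
Proof.
rewrite coef_comp_poly.
under eq_bigr do rewrite exprZn coefZ coefXn.
have [lt_i|le_i] := ltnP i (size p).
  rewrite (bigD1 (Ordinal lt_i)) //= eqxx mulr1 big1 ?addr0 // => k.
  by rewrite -val_eqE /= eq_sym => /negbTE ->; rewrite mulr0 mulr0.
rewrite big1; last first.
  move=> k _; have : (k < i)%N by apply: leq_trans (ltn_ord k) le_i.
  by rewrite ltn_neqAle eq_sym => /andP[/negbTE -> _]; rewrite !mulr0.
by move/leq_sizeP: le_i => /(_ i (leqnn i)) ->; rewrite mul0r.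
Qed.

Lemma size_thX : size (th *: ('X : {poly K})) = 2.
Proof. by rewrite size_scale ?size_polyX ?th_neq0. Qed.

Lemma hthX (x : K) : (th *: ('X : {poly K})).[x] = th * x.
Proof. by rewrite hornerZ hornerX. Qed.

Lemma TR j : Ecarlitz F j.+1 \Po (th *: 'X) =
  th ^+ (q ^ j.+1) *: Ecarlitz F j.+1 + Ecarlitz F j.
Proof.
set E := Ecarlitz F j.+1; set E' := Ecarlitz F j; set N := (q ^ j.+1)%N.
have fl : flin (fun x => E.[th * x] - (th ^+ N * E.[x] + E'.[x])).
  apply: (@flin_add (fun x => E.[th * x]) (fun x => - (th ^+ N * E.[x] + E'.[x]))).
    exact: (@flin_comp (fun x => E.[x]) (fun x => th * x) (flin_Ec _) (flin_mull _)).
  apply: (@flin_opp (fun x => th ^+ N * E.[x] + E'.[x])).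
  apply: (@flin_add (fun x => th ^+ N * E.[x]) (fun x => E'.[x])); last exact: flin_Ec.
  exact: (@flin_scale _ (fun x => E.[x]) (flin_Ec _)).
have van : forall a : {poly F}, (size a <= j.+1)%N ->
    E.[th * iA a] - (th ^+ N * E.[iA a] + E'.[iA a]) = 0.
  have van0 : forall i, (i < j.+1)%N ->
      E.[th * th ^+ i] - (th ^+ N * E.[th ^+ i] + E'.[th ^+ i]) = 0.
    move=> i; rewrite ltnS leq_eqVlt => /orP[/eqP ->|lt_ij].
      rewrite /E /E' -exprS !Ec_thn Ec_root_th //.
      by rewrite mulr0 add0r subrr.
    rewrite /E /E' -exprS !Ec_root_th //; last by apply: ltnW.
    by rewrite mulr0 !add0r oppr0.
  by move=> a ha; exact: (@flin_vanish _ _ fl van0 a ha).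
apply/eqP; rewrite -subr_eq0; apply/eqP.
apply: (@roots_geq_poly_eq0 _ _ (map (@iA F) (Adeg F j.+1))).
- apply/allP => x /mapP [a ha ->]; rewrite mem_Adeg in ha.
  rewrite /root hornerD hornerN horner_comp hthX hornerD (hornerZ (th ^+ N)).
  by rewrite van.
- by rewrite (map_inj_uniq iA_inj) uniq_Adeg.
rewrite size_map size_Adeg -/N.
have sE : size E = N.+1 by rewrite size_Ec.
have sE' : (size E' <= N)%N by rewrite size_Ec qpow_lt.
apply: size_le_pred.
  apply: sizeB_le; first by rewrite size_comp_poly2 ?size_thX // sE.
  apply: sizeD_le; first by rewrite -sE size_scale_leq.
  by apply: leq_trans sE' _.
rewrite coefB coefD coef_comp_thX (coefZ (th ^+ N)).
by move/leq_sizeP: sE' => /(_ N (leqnn N)) ->; rewrite addr0 mulrC subrr.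
Qed.


Lemma E0 : Ecarlitz F 0 = 'X.
Proof.
rewrite /Ecarlitz /ee Dprod_Adeg Adeg0 !big_seq1 expr0 addr0 iA1 invr1 scale1r.
by rewrite iA0 subr0.
Qed.

Lemma lam j : iA (ell F j) * (Ecarlitz F j)`_1 = 1.
Proof.
elim: j => [|j IH].
  by rewrite /ell big_geq // iA1 E0 coefX mul1r.
have := congr1 (fun p : {poly K} => p`_1) (TR j).
rewrite /= coef_comp_thX coefD (coefZ (th ^+ _)) expr1 => H.
rewrite /ell big_nat_recr // -/(ell F j) iAM iAB iAXn -thE -mulrA mulrBl.
by rewrite [th * _]mulrC H addrAC subrr add0r.
Qed.

Lemma TRe j x : (Ecarlitz F j).[th * x] =
  th ^+ (q ^ j) * (Ecarlitz F j).[x] + (if j is j'.+1 then (Ecarlitz F j').[x] else 0).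
Proof.
case: j => [|j]; first by rewrite E0 !hornerX expn0 expr1 addr0.
have := congr1 (fun p : {poly K} => p.[x]) (TR j).
by rewrite /= horner_comp hthX hornerD (hornerZ (th ^+ _)).
Qed.

Lemma bpolyS j : bpoly F j.+1 = bpoly F j * ('X - (th ^+ (q ^ j))%:P).
Proof. by rewrite /bpoly big_ord_recr /= iAXn. Qed.

Lemma bpoly0 : bpoly F 0 = 1.
Proof. by rewrite /bpoly big_ord0. Qed.

Lemma ring_aux (R : comNzRingType) (b a e X : R) :
  b * (a * e) + b * (X - a) * e = X * b * e.
Proof.
by rewrite mulrBr mulrBl mulrA addrC subrK [b * X]mulrC.
Qed.

End Carlitz.

Section Carlitz.
Variable F : finFieldType.
Local Notation K := {fraction {poly F}}.
Local Notation q := #|F|.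
Local Notation th := (th F).
Local Notation io := (io F).
Lemma F2i d i : (i < d)%N ->
  \sum_(j < d) bpoly F j * ((Ecarlitz F j).[th ^+ i])%:P = 'X^i.
Proof.
have bS := @bpolyS F; have b0 := @bpoly0 F; have hE0 := E0 F.
have hTR := @TRe F; have hroot := @Ec_root_th F.
move: (bpoly F) (Ecarlitz F) bS b0 hE0 hTR hroot => b E bS b0 hE0 hTR hroot.
elim: i => [|i IH] hid.
  case: d hid => // d _; rewrite big_ord_recl /= big1 => [|j _].
    by rewrite b0 hE0 hornerX !expr0 mul1r addr0.
  rewrite hroot; last by [].
  rewrite polyC0; exact: mulr0.
case: d hid IH => // d hid IH.
have {}IH := IH (ltnW hid).
transitivity (\sum_(j < d.+1) ('X * b j) * ((E j).[th ^+ i])%:P);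
  last by rewrite exprS -[in RHS]IH mulr_sumr; apply: eq_bigr => j _; rewrite mulrA.
transitivity (\sum_(j < d.+1) (b j * ((th ^+ (q ^ j) * (E j).[th ^+ i])%:P) +
   b j * ((if nat_of_ord j is j'.+1 then (E j').[th ^+ i] else 0)%:P))).
  by apply: eq_bigr => j _; rewrite (exprS th i) hTR polyCD mulrDr.
rewrite big_split /= [X in _ + X = _]big_ord_recl /= polyC0 mulr0 add0r.
have -> : \sum_(j < d) b (bump 0 j) * ((E (0 + j)%N).[th ^+ i])%:P =
    \sum_(j < d.+1) b j.+1 * ((E j).[th ^+ i])%:P.
  rewrite big_ord_recr /= hroot; last exact: hid.
  rewrite polyC0 mulr0 addr0; apply: eq_bigr => j _.
  by rewrite add0n.
rewrite -big_split /=; apply: eq_bigr => j _.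
rewrite bS polyCM; exact: ring_aux.
Qed.

Lemma chiE (a : {poly F}) : chi_t a = \sum_(i < size a) io a`_i *: 'X^i.
Proof. by rewrite /chi_t /map_poly poly_def. Qed.

Lemma F2 d (a : {poly F}) : (size a <= d)%N ->
  \sum_(j < d) bpoly F j * ((Ecarlitz F j).[iA a])%:P = chi_t a.
Proof.
move=> ha; rewrite chiE.
under eq_bigr do rewrite (flin_expand (@flin_Ec F _)) rmorph_sum mulr_sumr.
rewrite exchange_big /=; apply: eq_bigr => i _.
rewrite -(F2i (leq_trans (ltn_ord i) ha)) scaler_sumr; apply: eq_bigr => j _.
by rewrite polyCM -mul_polyC mulrCA.
Qed.

End Carlitz.

Section Carlitz.
Variable F : finFieldType.
Local Notation K := {fraction {poly F}}.
Local Notation q := #|F|.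

Lemma size_sum_le (R : nzRingType) I (r : seq I) (P : pred I) (G : I -> {poly R}) n :
  (forall i, P i -> (size (G i) <= n)%N) -> (size (\sum_(i <- r | P i) G i)%R <= n)%N.
Proof.
move=> h; apply: (big_ind (fun p : {poly R} => (size p <= n)%N)) => //.
  by rewrite size_poly0.
by move=> x y; apply: sizeD_le.
Qed.

Lemma sizeCM_le (R : nzRingType) (c : R) (p : {poly R}) : (size (c%:P * p)%R <= size p)%N.
Proof. by rewrite mul_polyC size_scale_leq. Qed.

Lemma main d : (0 < d)%N ->
  \sum_(a <- Adeg F d)
      (chi_t a)%:P *
      liftz ((iA (ell F d)) *:
               ((Ecarlitz F d \Po ('X - (iA a)%:P)) %/ ('X - (iA a)%:P)))
  = \sum_(j < d) (bpoly F j)%:P * liftz (Ecarlitz F j).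
Proof.
move=> hd.
set E := Ecarlitz F d.
have E0r : root E 0.
  apply/eqP; have := @Ec_root F d 0; rewrite size_poly0 iA0; by apply.
case/factor_theorem: E0r => Q hQ; rewrite polyC0 subr0 in hQ.
have hdiv a : (E \Po ('X - (iA a)%:P)) %/ ('X - (iA a)%:P) = Q \Po ('X - (iA a)%:P).
  rewrite hQ comp_polyM comp_polyX mulpK; first by [].
  by rewrite -size_poly_eq0 size_XsubC.
rewrite (eq_bigr (fun a => (chi_t a)%:P * liftz (iA (ell F d) *: (Q \Po ('X - (iA a)%:P)))));
  last by move=> a _; rewrite hdiv.
have sE : size E = (q ^ d).+1 := size_Ec F d.
have Qn0 : Q != 0.
  by apply/eqP => Q0; move: sE; rewrite hQ Q0 mul0r size_poly0.
have sQ : size Q = (q ^ d)%N by move: sE; rewrite hQ size_mulX // => -[].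
have QE : Q`_0 = E`_1 by rewrite hQ coefMX.
have Q0v : iA (ell F d) * Q.[0] = 1 by rewrite horner_coef0 QE /E lam.
have Qv (b : {poly F}) : (size b <= d)%N -> b != 0 -> Q.[iA b] = 0.
  move=> hb bn0; have := @Ec_root F d b hb; rewrite -/E hQ hornerM hornerX.
  by move/eqP; rewrite mulf_eq0 iA_eq0 (negbTE bn0) orbF => /eqP.
apply/eqP; rewrite -subr_eq0; apply/eqP.
apply: (@roots_geq_poly_eq0 _ _ (map (fun a => (iA a)%:P) (Adeg F d))).
- apply/allP => x /mapP [a0 ha0 ->].
  rewrite /root hornerD hornerN !horner_sum.
  rewrite (eq_bigr (fun a => chi_t a * (iA (ell F d) * Q.[iA a0 - iA a])%:P)); last first.
    by move=> a _; rewrite hornerCM /liftz horner_map hornerZ horner_comp hornerXsubC.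
  rewrite (eq_bigr (fun j : 'I_d => bpoly F j * ((Ecarlitz F j).[iA a0])%:P)); last first.
    by move=> j _; rewrite hornerCM /liftz horner_map.
  rewrite F2; last by rewrite -mem_Adeg.
  rewrite (bigD1_seq a0 ha0 (uniq_Adeg _ _)) /= subrr Q0v polyC1 mulr1.
  rewrite big1_seq ?addr0 ?subrr ?eqxx //.
  move=> a /andP [ne ha]; rewrite -iAB Qv.
  + rewrite (mulr0 (iA (ell F d))) polyC0; exact: mulr0.
  + by apply: sizeB_le; rewrite -mem_Adeg.
  + by rewrite subr_eq0 eq_sym.
- have inj : injective (fun a : {poly F} => (iA a)%:P).
    by move=> a b /polyC_inj /iA_inj.
  rewrite (map_inj_uniq inj); exact: uniq_Adeg.
rewrite size_map size_Adeg; apply: sizeB_le.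
  apply: size_sum_le => a _; apply: leq_trans (sizeCM_le _ _) _.
  rewrite /liftz size_map_polyC; apply: leq_trans (size_scale_leq _ _) _.
  by rewrite size_comp_poly2 ?size_XsubC // sQ.
apply: size_sum_le => j _; apply: leq_trans (sizeCM_le _ _) _.
rewrite /liftz size_map_polyC size_Ec.
apply: leq_trans (qpow_lt F j) _.
by rewrite leq_exp2l ?q_gt1.
Qed.
End Carlitz.

Unset Implicit Arguments.

Theorem corollary2p6 (F : finFieldType) (d : nat) (hd : (0 < d)%N) :
  \sum_(a <- Adeg F d)
      (chi_t a)%:P *
      liftz ((iA (ell F d)) *:
               ((Ecarlitz F d \Po ('X - (iA a)%:P)) %/ ('X - (iA a)%:P)))
  = \sum_(j < d) (bpoly F j)%:P * liftz (Ecarlitz F j).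
Proof. exact: (@main F d hd). Qed.
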